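(* Let $\mathcal S=\{d_1,\dots,d_k\}\subset\mathbb R^n$ be a positive spanning set of unit vectors and let $u^*$ be a cosine vector of $\mathcal S$. Then there exists a basis $\mathcal B\subset\mathcal S$ of $\mathbb R^n$ such that $u^*$ is the Gram vector of $\mathcal B$ with Gram value equal to $\operatorname{cm}(\mathcal S)$.
   Context: A finite set is positive spanning if its positive span $\{\sum\lambda_id_i:\lambda_i\ge0\}$ is $\mathbb R^n$. The cosine measure is $\operatorname{cm}(\mathcal S)=\min_{\|u\|=1}\max_{d\in\mathcal S}\frac{d^\top u}{\|d\|}$ and its minimizers are cosine vectors. For a basis $\mathcal B=\{b_1,\dots,b_n\}$ of $\mathbb R^n$, a Gram vector of $\mathcal B$ with Gram value $\gamma$ is a unit vector $u$ with $u^\top b_i=\gamma>0$ for all $i$. *)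

(* Defs.v *)
From mathcomp Require Import all_boot all_order all_algebra.
From mathcomp Require Import all_classical all_reals.
Set Implicit Arguments. Unset Strict Implicit. Unset Printing Implicit Defensive.
Import Order.TTheory GRing.Theory Num.Theory.
Local Open Scope ring_scope.
Local Open Scope classical_set_scope.

Section CosineMeasure.
Variables (R : realType) (n k : nat).

Definition dotv (u v : 'rV[R]_n) : R := \sum_(i < n) u 0 i * v 0 i.
Definition enorm (u : 'rV[R]_n) : R := Num.sqrt (dotv u u).

Definition positive_spanning (d : 'I_k -> 'rV[R]_n) : Prop :=
  forall x : 'rV[R]_n, exists lam : 'I_k -> R,
    (forall i, 0 <= lam i) /\ x = \sum_(i < k) lam i *: d i.

Definition cosv (dv u : 'rV[R]_n) : R := dotv dv u / enorm dv.

Definition is_max_cos (d : 'I_k -> 'rV[R]_n) (u : 'rV[R]_n) (m : R) : Prop :=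
  (exists i, m = cosv (d i) u) /\ (forall i, cosv (d i) u <= m).

(* cm(S) = min over unit u of max_d d^T u/||d||  (taken as an infimum) *)
Definition cm (d : 'I_k -> 'rV[R]_n) : R :=
  inf [set m | exists u : 'rV[R]_n, enorm u = 1 /\ is_max_cos d u m].

Definition cosine_vector (d : 'I_k -> 'rV[R]_n) (u : 'rV[R]_n) : Prop :=
  enorm u = 1 /\ exists m, is_max_cos d u m /\ m = cm d.

Definition gram_vector (B : 'M[R]_n) (u : 'rV[R]_n) (g : R) : Prop :=
  enorm u = 1 /\ 0 < g /\ forall j : 'I_n, dotv u (row j B) = g.

End CosineMeasure.

(* Main.v *)
Require Import Defs.
From mathcomp Require Import all_boot all_order all_algebra.
From mathcomp Require Import all_classical all_reals.
From mathcomp Require Import ring lra.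
Import Order.TTheory GRing.Theory Num.Theory.
Local Open Scope ring_scope.

Section Helpers.
Variables (R : realType) (n : nat).
Implicit Types (u v w : 'rV[R]_n).

Lemma dotvC u v : dotv u v = dotv v u.
Proof. by rewrite /dotv; apply: eq_bigr => i _; rewrite mulrC. Qed.

Lemma dotvDr u v w : dotv u (v + w) = dotv u v + dotv u w.
Proof. by rewrite /dotv -big_split; apply: eq_bigr => i _; rewrite mxE mulrDr. Qed.

Lemma dotvZr u a v : dotv u (a *: v) = a * dotv u v.
Proof.
rewrite /dotv mulr_sumr; apply: eq_bigr => i _; rewrite mxE; ring.
Qed.

Lemma dotvDl u v w : dotv (v + w) u = dotv v u + dotv w u.
Proof. by rewrite dotvC dotvDr !(dotvC u). Qed.

Lemma dotvZl u a v : dotv (a *: v) u = a * dotv v u.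
Proof. by rewrite dotvC dotvZr dotvC. Qed.

Lemma dotvNr u v : dotv u (- v) = - dotv u v.
Proof. by rewrite -scaleN1r dotvZr mulN1r. Qed.

Lemma dotv_sumr (k : nat) u (F : 'I_k -> 'rV[R]_n) :
  dotv u (\sum_(i < k) F i) = \sum_(i < k) dotv u (F i).
Proof.
rewrite /dotv; under eq_bigr => j _ do rewrite summxE mulr_sumr.
by rewrite exchange_big.
Qed.

Lemma dotv_ge0 u : 0 <= dotv u u.
Proof. by rewrite /dotv sumr_ge0 // => i _; rewrite -expr2 sqr_ge0. Qed.

Lemma dotv_gt0 u : u != 0 -> 0 < dotv u u.
Proof.
move=> hu; rewrite lt_def dotv_ge0 andbT; apply: contra hu => /eqP h.
have H : forall i, i \in xpredT -> u 0 i * u 0 i = 0.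
  apply: (@psumr_eq0P _ _ xpredT (fun i : 'I_n => u 0 i * u 0 i)) => //.
  by move=> i _; rewrite -expr2 sqr_ge0.
apply/eqP/rowP => i; rewrite !mxE; apply/eqP.
by rewrite -sqrf_eq0 expr2 H.
Qed.

Lemma enorm1 u : enorm u = 1 -> dotv u u = 1.
Proof. by move=> h; rewrite -(sqr_sqrtr (dotv_ge0 u)) -/(enorm u) h expr1n. Qed.

End Helpers.
Arguments dotv_gt0 {R n u}.
Arguments enorm1 {R n u}.
Arguments dotv_ge0 {R n}.
Arguments dotvC {R n}.

Lemma exists_argmax (R : realType) (k : nat) (F : 'I_k -> R) (i0 : 'I_k) :
  exists j, forall i, F i <= F j.
Proof.
case: (@arg_maxP _ R _ i0 xpredT F erefl) => j _ hj.
by exists j => i; apply: hj.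
Qed.

Theorem corollary1 (R : realType) (n k : nat) (d : 'I_k -> 'rV[R]_n)
  (hunit : forall i, enorm (d i) = 1)
  (hps : positive_spanning d)
  (ustar : 'rV[R]_n) (hcos : cosine_vector d ustar) :
  exists f : 'I_n -> 'I_k,
    injective f /\
    let B := \matrix_(j < n) d (f j) in
    row_free B /\ row_full B /\ gram_vector B ustar (cm d).
Proof.
case: hcos => hu [m0 [[[i0 hi0] hmax] hm0]].
have uu : dotv ustar ustar = 1 by apply: enorm1.
have cosE : forall i v, cosv (d i) v = dotv (d i) v.
  by move=> i v; rewrite /cosv hunit divr1.
have pos : forall v : 'rV[R]_n, v != 0 -> exists i, 0 < dotv (d i) v.
  move=> v hv; case: (hps v) => lam [hlam hv'].
  case: (pselect (exists i, 0 < dotv (d i) v)) => // hn.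
  have hle : forall i, dotv (d i) v <= 0.
    by move=> i; rewrite leNgt; apply/negP => h; apply: hn; exists i.
  have := dotv_gt0 hv; rewrite {2}hv' dotv_sumr.
  rewrite (_ : \sum_(i < k) _ = \sum_(i < k) lam i * dotv (d i) v).
    by rewrite ltNge sumr_le0 // => i _; rewrite mulr_ge0_le0.
  by apply: eq_bigr => i _; rewrite dotvZr dotvC.
have nz1 : forall v : 'rV[R]_n, enorm v = 1 -> v != 0.
  move=> v /enorm1 hv; apply/eqP => v0; move: hv.
  by rewrite v0 /dotv big1 // => [/eqP|i _]; rewrite ?mxE ?mulr0 // eq_sym oner_eq0.
have m0pos : 0 < m0.
  have [i1 hi1] := pos _ (nz1 _ hu).
  by apply: (lt_le_trans hi1); rewrite -cosE.
have minim : forall v, enorm v = 1 -> exists i, m0 <= dotv (d i) v.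
  move=> v hv; have [j hj] := @exists_argmax R k (fun i => cosv (d i) v) i0.
  exists j; rewrite hm0 -cosE; apply: ge_inf.
    exists 0 => y [w [hw [[i ->] hi]]].
    have [i2 hi2] := pos _ (nz1 _ hw).
    by apply: (le_trans (ltW hi2)); rewrite -cosE.
  by exists v; split => //; split => //; exists j.
pose act i := dotv (d i) ustar == m0.
pose Dact : 'M[R]_(k, n) := \matrix_(i, l) (if act i then d i 0 l else 0).
have full : row_full Dact.
  case: (boolP (row_full Dact)) => // hnf; exfalso.
  have rk : (\rank Dact < n)%N.
    by rewrite ltn_neqAle hnf rank_leq_col.
  pose K := kermx Dact^T.
  have Knz : K != 0.
    by rewrite -mxrank_eq0 mxrank_ker mxrank_tr -lt0n subn_gt0.
  have [j hj] : exists j, row j K != 0.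
    case: (pselect (exists j, row j K != 0)) => // hn; move/eqP: Knz; case.
    apply/row_matrixP => j; rewrite row0; apply/eqP.
    by case: (boolP (row j K == 0)) => // h; case: hn; exists j.
  pose w0 := row j K.
  have hw0 : w0 *m Dact^T = 0 by apply/sub_kermxP; exact: row_sub.
  have kerw0 : forall i, act i -> dotv (d i) w0 = 0.
    move=> i hi; have := congr1 (fun M : 'M_(1, k) => M 0 i) hw0.
    rewrite /= !mxE dotvC => <-; apply: eq_bigr => l _.
    by rewrite !mxE hi.
  have [w [kerw [ww uw]]] : exists w, (forall i, act i -> dotv (d i) w = 0)
      /\ 0 < dotv w w /\ 0 <= dotv ustar w.
    have w0nz : 0 < dotv w0 w0 := dotv_gt0 hj.
    case: (lerP 0 (dotv ustar w0)) => h.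
      by exists w0; split.
    exists (- w0); split; [|split].
    - by move=> i hi; rewrite dotvNr kerw0 ?oppr0.
    - by rewrite dotvNr dotvC dotvNr opprK.
    - by rewrite dotvNr oppr_ge0 ltW.
  pose gap i := m0 - dotv (d i) ustar.
  have gap0 : forall i, 0 <= gap i by move=> i; rewrite subr_ge0 -cosE hmax.
  have gapP : forall i, ~~ act i -> 0 < gap i.
    by move=> i hi; rewrite lt_def gap0 andbT subr_eq0 eq_sym.
  pose h i := (`|dotv (d i) w| + 1) / gap i.
  have h0 : forall i, 0 <= h i by move=> i; rewrite divr_ge0 // addr_ge0.
  pose S := \sum_(i < k) h i.
  have S0 : 0 <= S by rewrite sumr_ge0.
  have hS : forall i, h i <= S.
    by move=> i; rewrite /S (bigD1 i) //= lerDl sumr_ge0.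
  pose s := (1 + S)^-1.
  have s0 : 0 < s by rewrite invr_gt0; lra.
  have s1 : s * (1 + S) = 1 by rewrite mulVf //; apply/eqP => e; lra.
  have sP : forall i, ~~ act i -> s * dotv (d i) w < gap i.
    move=> i hi; have g := gapP i hi.
    have e1 : s * h i <= 1.
      rewrite -s1; apply: ler_wpM2l; first exact: ltW.
      by have := hS i; lra.
    have e2 : s * (`|dotv (d i) w| + 1) = s * h i * gap i.
      by rewrite /h -mulrA divfK // gt_eqF.
    have e3 := ler_norm (dotv (d i) w).
    move: e1 e2 e3 g s0; set a := dotv (d i) w; set X := s * h i.
    move=> e1 e2 e3 g s0'; nra.
  pose v := ustar + s *: w.
  have vv : dotv v v = 1 + 2 * s * dotv ustar w + s ^+ 2 * dotv w w.
    rewrite /v !dotvDr !dotvDl !dotvZr !dotvZl uu (dotvC w ustar); ring.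
  have N1 : 1 < dotv v v.
    rewrite vv; have := mulr_gt0 (mulr_gt0 s0 s0) ww.
    have := mulr_ge0 (ltW s0) uw; nra.
  set N := dotv v v in vv N1.
  have sq := sqr_sqrtr (ltW (lt_trans ltr01 N1)).
  have sq0 := sqrtr_ge0 N.
  have r1 : 1 < Num.sqrt N by nra.
  pose c := (Num.sqrt N)^-1.
  have cr : c * Num.sqrt N = 1 by rewrite mulVf // gt_eqF // (lt_trans ltr01 r1).
  have c0 : 0 < c by rewrite invr_gt0 (lt_trans ltr01 r1).
  have c1 : c < 1 by nra.
  pose v' := c *: v.
  have hv' : enorm v' = 1.
    rewrite /enorm /v' dotvZr dotvZl -/N.
    rewrite (_ : c * (c * N) = 1) ?sqrtr1 //.
    by rewrite -sq; rewrite expr2; nra.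
  have [i hi] := minim v' hv'.
  move: hi; rewrite /v' dotvZr /v dotvDr dotvZr.
  case: (boolP (act i)) => ai.
    rewrite kerw // mulr0 addr0 (eqP ai) => hi; nra.
  have := sP i ai; rewrite /gap => hs hi.
  set X := dotv (d i) ustar + s * dotv (d i) w in hi.
  have hX : X < m0 by rewrite /X; lra.
  nra.
pose f := fullrankfun full.
have rf := fullrowsub_free full.
have allact : forall j, act (f j).
  move=> j; case: (boolP (act (f j))) => // nj; exfalso.
  have H := row_free_inj rf (x1 := delta_mx (0 : 'I_1) j) (x2 := 0).
  rewrite -rowE mul0mx in H.
  have : delta_mx 0 j = 0 :> 'rV[R]_n.
    apply: H; apply/rowP => l; rewrite !mxE (negbTE nj).
    by [].

  move/(congr1 (fun M : 'rV[R]_n => M 0 j)); rewrite !mxE !eqxx /=.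
  by move/eqP; rewrite oner_eq0.
have BE : \matrix_(j < n) d (f j) = rowsub f Dact.
  by apply/matrixP => j l; rewrite !mxE allact.
exists f; split; first exact: fullrankfun_inj.
rewrite /= BE; split => //; split; first exact: fullrowsub_full.
split => //; rewrite -hm0; split => // j.
rewrite -BE (_ : row j _ = d (f j)); last by apply/rowP => l; rewrite !mxE.
by rewrite dotvC (eqP (allact j)).
Qed.
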